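(* Consider Algorithm 1 applied to $\min\varphi(w)$ s.t. $w\in D$, assume the inner loop always terminates, and let $\{w^j\}$ be the resulting infinite sequence of outer iterates. Assume that $\varphi$ is bounded from below and uniformly continuous on $\mathcal S_\varphi(w^0):=\{w\in D:\varphi(w)\le\varphi(w^0)\}$. Then $\|w^{j+1}-w^j\|\to0$ as $j\to\infty$.
   Context: $\mathbb W$ is a Euclidean space, $\varphi\colon\mathbb W\to\mathbb R$ continuously differentiable, $D\subset\mathbb W$ nonempty and closed (neither need be convex). Algorithm 1 (general spectral gradient method, without termination test): parameters $\tau>1$, $\sigma\in(0,1)$, $0<\gamma_{\min}\le\gamma_{\max}<\infty$, $m\in\mathbb N$, starting point $w^0\in D$. For $j=0,1,2,\dots$: set $m_j:=\min(j,m)$ and choose $\gamma_j^0\in[\gamma_{\min},\gamma_{\max}]$; for $i=1,2,\dots$ set $\gamma_{j,i}:=\tau^{i-1}\gamma_j^0$ and compute a (global) solution $w^{j,i}$ of $\min_w \varphi(w^j)+\langle\nabla\varphi(w^j),w-w^j\rangle+\frac{\gamma_{j,i}}2\|w-w^j\|^2$ s.t. $w\in D$ (subproblem $Q(j,i)$); the inner loop stops at the first $i$ with $\varphi(w^{j,i})\le\max_{r=0,\dots,m_j}\varphi(w^{j-r})+\sigma\langle\nabla\varphi(w^j),w^{j,i}-w^j\rangle$; then set $i_j:=i$, $\gamma_j:=\gamma_{j,i_j}$, $w^{j+1}:=w^{j,i_j}$. *)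

(* Defs.v *)
From HB Require Import structures.
From mathcomp Require Import all_boot all_order all_algebra.
From mathcomp Require Import all_classical all_reals all_analysis.
Set Implicit Arguments. Unset Strict Implicit. Unset Printing Implicit Defensive.
Import Order.TTheory GRing.Theory Num.Theory.
Import numFieldNormedType.Exports.
Local Open Scope ring_scope.

(* The Euclidean space W is modelled as R^n = 'rV[R]_n with the standard
   inner product and the induced Euclidean norm. *)

Definition dotE (R : realType) (n : nat) (u v : 'rV[R]_n) : R :=
  \sum_(i < n) u ord0 i * v ord0 i.

Definition normE (R : realType) (n : nat) (u : 'rV[R]_n) : R :=
  Num.sqrt (dotE u u).

Definition C1_with_gradient (R : realType) (n : nat)
  (phi : 'rV[R]_n -> R) (grad : 'rV[R]_n -> 'rV[R]_n) : Prop :=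
  (forall w, differentiable phi w /\ forall v, 'd phi w v = dotE (grad w) v)
  /\ continuous grad.

Definition Qmodel (R : realType) (n : nat)
  (phi : 'rV[R]_n -> R) (grad : 'rV[R]_n -> 'rV[R]_n)
  (wj : 'rV[R]_n) (gam : R) (w : 'rV[R]_n) : R :=
  phi wj + dotE (grad wj) (w - wj) + gam / 2 * normE (w - wj) ^+ 2.

Definition solves_Q (R : realType) (n : nat)
  (phi : 'rV[R]_n -> R) (grad : 'rV[R]_n -> 'rV[R]_n) (D : set 'rV[R]_n)
  (wj : 'rV[R]_n) (gam : R) (x : 'rV[R]_n) : Prop :=
  D x /\ forall v, D v -> Qmodel phi grad wj gam x <= Qmodel phi grad wj gam v.

Definition refval (R : realType) (n : nat) (phi : 'rV[R]_n -> R)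
  (w : nat -> 'rV[R]_n) (m j : nat) : R :=
  \big[Num.max/phi (w j)]_(r < (minn j m).+1) phi (w (j - r)%N).

Definition accepted (R : realType) (n : nat)
  (phi : 'rV[R]_n -> R) (grad : 'rV[R]_n -> 'rV[R]_n) (sigma : R)
  (w : nat -> 'rV[R]_n) (m j : nat) (x : 'rV[R]_n) : Prop :=
  phi x <= refval phi w m j + sigma * dotE (grad (w j)) (x - w j).

(* (w, gam0, wt, ii) is a run of Algorithm 1 (infinite, every inner loop
   terminating): gam0 j = gamma_j^0, wt j i = w^{j,i}, ii j = i_j. *)
Definition alg1_run (R : realType) (n : nat)
  (phi : 'rV[R]_n -> R) (grad : 'rV[R]_n -> 'rV[R]_n) (D : set 'rV[R]_n)
  (tau sigma gmin gmax : R) (m : nat)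
  (w : nat -> 'rV[R]_n) (gam0 : nat -> R) (wt : nat -> nat -> 'rV[R]_n)
  (ii : nat -> nat) : Prop :=
  D (w 0%N) /\
  forall j : nat,
    [/\ gmin <= gam0 j <= gmax,
        (1 <= ii j)%N,
        (forall i : nat, (1 <= i <= ii j)%N ->
           solves_Q phi grad D (w j) (tau ^+ i.-1 * gam0 j) (wt j i)),
        (forall i : nat, (1 <= i < ii j)%N ->
           ~ accepted phi grad sigma w m j (wt j i)) &
        accepted phi grad sigma w m j (wt j (ii j)) /\
        w j.+1 = wt j (ii j)].

(* Main.v *)
Require Import Defs.
From HB Require Import structures.
From mathcomp Require Import all_boot all_order all_algebra.
From mathcomp Require Import all_classical all_reals all_analysis.
From mathcomp Require Import lra zify ring.
Import Order.TTheory GRing.Theory Num.Theory.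
Import numFieldNormedType.Exports.
Local Open Scope ring_scope.
Local Open Scope classical_set_scope.

Section Abs.
Variables (R : realType) (f Rv d : nat -> R) (m : nat) (c : R).
Hypothesis hdesc : forall j, f j.+1 <= Rv j - c * d j ^+ 2.
Hypothesis hc : 0 < c.
Hypothesis hargmax : forall j, exists r, (r <= minn j m)%N /\ Rv j = f (j - r)%N.
Hypothesis hge : forall j r, (r <= minn j m)%N -> f (j - r)%N <= Rv j.

Lemma Rv_dec j : Rv j.+1 <= Rv j.
Proof.
have [r [hr ->]] := hargmax j.+1.
case: r hr => [|r] hr.
  rewrite subn0; apply: le_trans (hdesc j) _.
  have h := mulr_ge0 (ltW hc) (sqr_ge0 (d j)); lra.
rewrite subSS; apply: hge.
move: hr; lia.
Qed.

Lemma Rv_mono i j : (i <= j)%N -> Rv j <= Rv i.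
Proof.
elim: j => [|j IH]; first by rewrite leqn0 => /eqP ->.
rewrite leq_eqVlt => /orP[/eqP -> //|]; rewrite ltnS => /IH.
exact: le_trans (Rv_dec j).
Qed.

Lemma f_level j : f j <= f 0%N.
Proof.
have <- : Rv 0%N = f 0%N by have [r [_ ->]] := hargmax 0%N.
have := hge j 0%N (leq0n _); rewrite subn0 => h.
by apply: le_trans h _; apply: Rv_mono.
Qed.

Variable L : R.
Hypothesis hL : forall j, L <= f j.
Hypothesis hd0 : forall j, 0 <= d j.
Hypothesis huc : forall eps, 0 < eps -> exists2 delta, 0 < delta &
  forall j, d j < delta -> `|f j.+1 - f j| < eps.

Let Rs := inf (range Rv).

Lemma hlb : has_lbound (range Rv).
Proof.
exists L => y; case=> i _ <-. have [r [_ ->]] := hargmax i. exact: hL.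
Qed.

Lemma Rs_le j : Rs <= Rv j.
Proof. by apply: (ge_inf hlb); exists j. Qed.

Lemma Rs_near eps : 0 < eps -> exists N, forall j, (N <= j)%N -> Rv j < Rs + eps.
Proof.
move=> he.
have hi : has_inf (range Rv) by split; [exists (Rv 0%N), 0%N | exact: hlb].
have [y [N _ eN] hN] := inf_adherent he hi; subst y.
by exists N => j hj; apply: le_lt_trans hN; apply: Rv_mono.
Qed.

Definition Pk (K : nat) := forall eps, 0 < eps -> exists N, forall j l k,
  (N <= j)%N -> (l <= j)%N -> (j <= l + m)%N -> Rv j = f l -> (k <= K)%N -> (k <= l)%N ->
  `|f (l - k)%N - Rs| < eps /\ ((0 < k)%N -> d (l - k)%N < eps).

Lemma Pk_all K : Pk K.
Proof.
elim: K => [|K IH] eps he.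
  have [N hN] := Rs_near eps he.
  exists N => j l k hj _ _ hl; rewrite leqn0 => /eqP -> _; split => //.
  rewrite subn0 -hl ger0_norm ?subr_ge0 ?Rs_le //.
  have := hN j hj; lra.
have he2 : 0 < eps / 2 by rewrite divr_gt0.
have [delta hdel huc'] := huc (eps/2) he2.
set e1 := Num.min eps delta.
have he1 : 0 < e1 by rewrite lt_min he hdel.
set eta := Num.min (eps / 2) (c * e1 ^+ 2 / 2).
have heta : 0 < eta by rewrite lt_min he2 divr_gt0 // mulr_gt0 // exprn_gt0.
have [N1 hN1] := IH eta heta.
have [N2 hN2] := Rs_near eta heta.
have etale : eta <= eps / 2 by rewrite ge_min lexx.
have etale2 : eta <= c * e1 ^+ 2 / 2 by rewrite ge_min lexx orbT.
exists (maxn N1 (N2 + m + K.+1)) => j l k; rewrite geq_max => /andP[hj1 hj2] hlj hjl hRl hk hkl.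
have [hkK|hkK] := leqP k K.
  have [h1 h2] := hN1 j l k hj1 hlj hjl hRl hkK hkl.
  split; first by apply: lt_le_trans h1 _; lra.
  by move=> /h2 h; apply: lt_le_trans h _; lra.
have ek : k = K.+1 by apply/eqP; rewrite eqn_leq hk hkK.
subst k.
set l' := (l - K.+1)%N.
have el : (l - K)%N = l'.+1 by rewrite /l' subnS prednK // subn_gt0.
have [h1 _] := hN1 j l K hj1 hlj hjl hRl (leqnn K) (ltnW hkl).
rewrite el in h1.
have hl' : (N2 <= l')%N by rewrite /l'; lia.
have hR := hN2 l' hl'.
have hdesc' := hdesc l'.
have hRs := Rs_le l'.
have hdl : d l' < e1.
  have hdd : c * d l' ^+ 2 < c * e1 ^+ 2.
    move: h1; rewrite ltr_norml => /andP[h1a h1b].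
    lra.
  have := hd0 l'; have : 0 < e1 := he1.
  move: hdd; rewrite !expr2 ltr_pM2l // => hdd h3 h4.
  rewrite ltNge; apply/negP => h; move: hdd; rewrite ltNge.
  by rewrite (ler_pM _ _ h h) // ltW.
have hdd : d l' < delta by apply: lt_le_trans hdl _; rewrite ge_min lexx orbT.
have := huc' l' hdd => hu.
split; last by move=> _; apply: lt_le_trans hdl _; rewrite ge_min lexx.
have -> : f l' - Rs = (f l'.+1 - Rs) - (f l'.+1 - f l') by ring.
apply: le_lt_trans (ler_normB _ _) _.
have : `|f l'.+1 - Rs| < eps / 2 by apply: lt_le_trans h1 etale.
move: hu; lra.
Qed.

Lemma abs_main eps : 0 < eps -> exists N, forall j, (N <= j)%N -> d j < eps.
Proof.
move=> he; have [N hN] := Pk_all m.+1 eps he.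
exists N => j hj.
have [r [hr hRr]] := hargmax (j + m.+1)%N.
have hrm : (r <= m)%N by move: hr; rewrite leq_min => /andP[].
have := hN (j + m.+1)%N (j + m.+1 - r)%N (j + m.+1 - r - j)%N.
have -> : (j + m.+1 - r - (j + m.+1 - r - j))%N = j by lia.
case.
- lia.
- lia.
- lia.
- done.
- lia.
- lia.
move=> _; apply; lia.
Qed.
End Abs.

Lemma max_or (R : realType) (x y : R) : Num.max x y = x \/ Num.max x y = y.
Proof. by rewrite maxEle; case: ifP; [right|left]. Qed.

Lemma bigmax_ge (R : realType) (x0 : R) k : forall (F : nat -> R) i, (i < k)%N ->
  F i <= \big[Num.max/x0]_(r < k) F r.
Proof.
elim: k => [|k IH] F i hi //; rewrite big_ord_recl /= le_max.
case: i hi => [|i] hi; first by rewrite lexx.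
have := IH (fun r => F r.+1) i hi.
have -> : \big[Num.max/x0]_(r < k) F (lift ord0 r) = \big[Num.max/x0]_(r < k) F r.+1.
  by apply: eq_bigr => r _; rewrite lift0.
by move=> ->; rewrite orbT.
Qed.

Lemma bigmax_ex (R : realType) (x0 : R) (F : nat -> R) k :
  \big[Num.max/x0]_(r < k) F r = x0 \/ exists2 i, (i < k)%N & \big[Num.max/x0]_(r < k) F r = F i.
Proof.
apply: (big_ind (fun z => z = x0 \/ exists2 i, (i < k)%N & z = F i)); first by left.
  by move=> x y hx hy; case: (@max_or R x y) => ->.
by move=> r _; right; exists r.
Qed.

Lemma dotE0 (R : realType) n (u : 'rV[R]_n) : dotE u 0 = 0.
Proof. by rewrite /dotE big1 // => i _; rewrite mxE mulr0. Qed.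

Lemma normE0 (R : realType) n : normE (0 : 'rV[R]_n) = 0.
Proof. by rewrite /normE dotE0 sqrtr0. Qed.

Theorem mainTheorem4 (R : realType) (n : nat)
  (phi : 'rV[R]_n -> R) (grad : 'rV[R]_n -> 'rV[R]_n) (D : set 'rV[R]_n)
  (tau sigma gmin gmax : R) (m : nat)
  (w : nat -> 'rV[R]_n) (gam0 : nat -> R) (wt : nat -> nat -> 'rV[R]_n)
  (ii : nat -> nat) :
  C1_with_gradient phi grad ->
  closed D ->
  1 < tau -> 0 < sigma < 1 -> 0 < gmin -> gmin <= gmax ->
  alg1_run phi grad D tau sigma gmin gmax m w gam0 wt ii ->
  (exists L : R, forall v, D v -> phi v <= phi (w 0%N) -> L <= phi v) ->
  (forall eps : R, 0 < eps -> exists2 delta : R, 0 < delta &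
     forall u v, D u -> phi u <= phi (w 0%N) -> D v -> phi v <= phi (w 0%N) ->
       normE (u - v) < delta -> `|phi u - phi v| < eps) ->
  (fun j : nat => normE (w j.+1 - w j)) @ \oo --> (0 : R).
Proof.
move=> _ _ htau /andP[hs0 hs1] hgmin _ [hD0 hrun] [L hL] huc.
set f := fun j => phi (w j).
set Rv := fun j => refval phi w m j.
set d := fun j => normE (w j.+1 - w j).
set c := sigma * gmin / 2.
have hc : 0 < c by rewrite /c divr_gt0 // mulr_gt0.
have hD : forall j, D (w j).
  elim => [//|j _]; have [_ h1 h2 _ [_ ->]] := hrun j.
  have hi : (1 <= ii j <= ii j)%N by rewrite h1 leqnn.
  by have [] := h2 _ hi.
have hdesc : forall j, f j.+1 <= Rv j - c * d j ^+ 2.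
  move=> j; have [/andP[hg0 _] h1 h2 _ [hacc ew]] := hrun j.
  have hi : (1 <= ii j <= ii j)%N by rewrite h1 leqnn.
  have [_ hQ] := h2 _ hi.
  have := hQ (w j) (hD j).
  rewrite /Qmodel subrr dotE0 normE0 expr0n /= mulr0 addr0 -ew.
  set q := dotE (grad (w j)) (w j.+1 - w j).
  set N2 := normE (w j.+1 - w j) ^+ 2.
  set gam := tau ^+ (ii j).-1 * gam0 j.
  move=> hq.
  have hgam : gmin <= gam.
    have g0 : 0 <= gam0 j := le_trans (ltW hgmin) hg0.
    have t1 : 1 <= tau ^+ (ii j).-1 by apply: exprn_ege1; exact: ltW.
    by apply: (le_trans hg0); rewrite /gam ler_peMl.
  have hN2 : 0 <= N2 by apply: sqr_ge0.
  have hgg : 0 <= gam - gmin by rewrite subr_ge0.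
  have h1' := mulr_ge0 (mulr_ge0 (ltW hs0) hgg) hN2.
  have hq' : q + gam / 2 * N2 <= 0 by move: hq; lra.
  have h3 := mulr_ge0_le0 (ltW hs0) hq'.
  move: hacc; rewrite /accepted -ew => hacc.
  rewrite /f /Rv /c /d -/N2; rewrite -/q in hacc; clearbody q N2 gam; lra.
have hargmax : forall j, exists r, (r <= minn j m)%N /\ Rv j = f (j - r)%N.
  move=> j; rewrite /Rv /refval.
  case: (@bigmax_ex R (phi (w j)) (fun r => phi (w (j - r)%N)) (minn j m).+1) => [->|[i hi ->]].
    by exists 0%N; rewrite subn0.
  by exists i.
have hge : forall j r, (r <= minn j m)%N -> f (j - r)%N <= Rv j.
  by move=> j r hr; rewrite /Rv /refval; apply: (@bigmax_ge R _ _ (fun r => phi (w (j - r)%N))).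
have hlev : forall j, f j <= f 0%N := @f_level R f Rv d m c hdesc hc hargmax hge.
have hLf : forall j, L <= f j by move=> j; apply: hL; [exact: hD | exact: hlev].
have hd0 : forall j, 0 <= d j by move=> j; apply: sqrtr_ge0.
have huc' : forall eps, 0 < eps -> exists2 delta, 0 < delta &
    forall j, d j < delta -> `|f j.+1 - f j| < eps.
  move=> eps he; have [delta hdel H] := huc eps he.
  exists delta => // j hj; apply: H; [exact: hD | exact: hlev | exact: hD | exact: hlev | exact: hj].
have hmain := @abs_main R f Rv d m c hdesc hc hargmax hge L hLf hd0 huc'.
apply/cvgrPdist_lt => eps he.
have [N hN] := hmain eps he.
exists N => // j /= hj.
by rewrite sub0r normrN ger0_norm ?hd0 //; apply: hN.
Qed.
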